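(* Consider an instance of the bipartite stable $b$-matching problem with bipartite graph $G=(U\cup W,E)$, preference lists $L$ and quota function $b$. Let $M_1$ be a $b$-matching with set of blocking pairs $B_1$, and let $(u,w)\in B_1$. Remove the blocking pair $(u,w)$ as follows: if $u$ is full in $M_1$, disconnect $u$ from a worst partner $w'$ of $u$; if $w$ is full in $M_1$, disconnect $w$ from a worst partner $u'$ of $w$; then add the edge $(u,w)$. Call the resulting $b$-matching $M_2$ and its set of blocking pairs $B_2$ (if nothing is disconnected from $u$, $w'$ is undefined; if nothing is disconnected from $w$, $u'$ is undefined). If $B_2\setminus B_1\neq\varnothing$, then at least one of $u'$, $w'$ exists, and every blocking pair in $B_2\setminus B_1$ involves $u'$ or $w'$.
   Context: An instance consists of an undirected bipartite graph $G=(V,E)$ with $V=U\cup W$ ($U,W$ disjoint), a quota function $b:V\to\mathbb{N}$, and for each agent $v\in V$ a preference list $L_v$ over the agents adjacent to $v$ (its candidates); $r_v(x)$ denotes the rank of $x$ in $v$'s list (smaller is better). A $b$-matching $M\subseteq E$ is a set of edges such that each $v$ lies in at most $b(v)$ edges of $M$; $M(v)$ is the set of partners of $v$; $v$ is full if $|M(v)|=b(v)$ and free otherwise; a worst partner of $v$ is an $x\in M(v)$ with $r_v(x)=\max\{r_v(y): y\in M(v)\}$. A pair $(u,w)$ is a blocking pair of $M$ if (i) $u\in L_w$, $w\in L_u$ and $(u,w)\notin M$; (ii) $u$ is free or strictly prefers $w$ to its worst partner in $M$; (iii) $w$ is free or strictly prefers $u$ to its worst partner in $M$. *)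

(* Defs.v *)
From mathcomp Require Import all_boot.
Set Implicit Arguments. Unset Strict Implicit. Unset Printing Implicit Defensive.

Section BMatching.
Variables (U W : finType).
Variable E : U -> W -> bool.
(* preference lists; rank = position in the list (smaller is better) *)
Variable Lu : U -> seq W.
Variable Lw : W -> seq U.
Variable bU : U -> nat.
Variable bW : W -> nat.

Definition rankU (u : U) (w : W) : nat := index w (Lu u).
Definition rankW (w : W) (u : U) : nat := index u (Lw w).

Definition wf_instance : Prop :=
  [/\ forall u, uniq (Lu u), forall w, uniq (Lw w),
      forall u w, (w \in Lu u) = E u w
    & forall u w, (u \in Lw w) = E u w].

Definition partnersU (M : {set U * W}) (u : U) : {set W} := [set w | (u, w) \in M].
Definition partnersW (M : {set U * W}) (w : W) : {set U} := [set u | (u, w) \in M].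

Definition is_bmatching (M : {set U * W}) : Prop :=
  [/\ forall p, p \in M -> E p.1 p.2,
      forall u, #|partnersU M u| <= bU u
    & forall w, #|partnersW M w| <= bW w].

Definition fullU M u := #|partnersU M u| == bU u.
Definition fullW M w := #|partnersW M w| == bW w.
Definition freeU M u := #|partnersU M u| < bU u.
Definition freeW M w := #|partnersW M w| < bW w.

Definition worstU M u (x : W) : bool :=
  (x \in partnersU M u) && [forall y in partnersU M u, rankU u y <= rankU u x].
Definition worstW M w (x : U) : bool :=
  (x \in partnersW M w) && [forall y in partnersW M w, rankW w y <= rankW w x].

Definition blocking (M : {set U * W}) (u : U) (w : W) : bool :=
  [&& (u \in Lw w), (w \in Lu u), ((u, w) \notin M),
      freeU M u || [exists x, worstU M u x && (rankU u w < rankU u x)]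
    & freeW M w || [exists x, worstW M w x && (rankW w u < rankW w x)]].

Definition blocking_set (M : {set U * W}) : {set U * W} :=
  [set p | blocking M p.1 p.2].

Definition remove_blocking (M : {set U * W}) (u : U) (w : W)
    (w' : option W) (u' : option U) : {set U * W} :=
  let RU := if w' is Some x then [set (u, x)] else set0 in
  let RW := if u' is Some y then [set (y, w)] else set0 in
  ((M :\: RU) :\: RW) :|: [set (u, w)].

End BMatching.

(* Main.v *)
Require Import Defs.
From mathcomp Require Import all_boot.
Set Implicit Arguments. Unset Strict Implicit. Unset Printing Implicit Defensive.

Definition cond (X : finType) (P : {set X}) (r : X -> nat) (b : nat) (y : X) : bool :=
  (#|P| < b) || [exists x, ((x \in P) && [forall z in P, r z <= r x]) && (r y < r x)].

Lemma cond_gen (X : finType) (P1 P2 : {set X}) r b (t y : X) :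
  #|P1| <= b -> t \notin P1 -> cond P1 r b t ->
  ((#|P1| < b) \/ (exists2 x0, (x0 \in P1) && [forall z in P1, r z <= r x0] &
      P2 = t |: (P1 :\ x0))) ->
  cond P2 r b y -> cond P1 r b y.
Proof.
move=> Hle Ht Hc.
case: (ltnP #|P1| b) => Hb; first by rewrite /cond Hb.
move=> [Hlt|[x0 /andP[Hx0 /forallP Hw] ->]]; first by [].
rewrite /cond cardsU1 in_setD1 (negbTE Ht) andbF add1n.
have Hc1 : (#|P1 :\ x0|).+1 = #|P1| by rewrite (cardsD1 x0 P1) Hx0.
rewrite Hc1 ltnNge Hb /= => /existsP[x /andP[/andP[Hx _] Hyx]].
apply/existsP; exists x0; rewrite Hx0 /=.
apply/andP; split; first by apply/forallP.
apply: (leq_trans Hyx).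
move: Hx; rewrite in_setU1 in_setD1 => /orP[/eqP ->|/andP[_ Hx]]; last first.
  by have := Hw x; rewrite Hx.
move: Hc; rewrite /cond ltnNge Hb /= => /existsP[x1 /andP[/andP[Hx1 _] Htx]].
have := Hw x1; rewrite Hx1 /= => H; exact: ltnW (leq_trans Htx H).
Qed.
Lemma inM2 (U W : finType) (M1 : {set U * W}) u w w' u' a b :
  ((a,b) \in remove_blocking M1 u w w' u') =
  ((a == u) && (b == w)) || [&& (a,b) \in M1, ~~ ((a == u) && (w' == Some b)) & ~~ ((u' == Some a) && (b == w))].
Proof.
case: w' => [x|]; case: u' => [y|]; rewrite /remove_blocking !inE /= ?xpair_eqE
  ?(inj_eq (@Some_inj _)) ?(eq_sym y) ?(eq_sym x);
by case: ((a,b) \in M1); case: (a==u); case: (b==w); try case: (a==y); try case: (b==x).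
Qed.

Lemma pU (U W : finType) (M : {set U * W}) a z : (z \in partnersU M a) = ((a,z) \in M).
Proof. by rewrite in_set. Qed.
Lemma pW (U W : finType) (M : {set U * W}) b z : (z \in partnersW M b) = ((z,b) \in M).
Proof. by rewrite in_set. Qed.

Lemma blockingE (U W : finType) (Lu : U -> seq W) (Lw : W -> seq U) bU bW M a b :
  blocking Lu Lw bU bW M a b =
  [&& a \in Lw b, b \in Lu a, (a,b) \notin M,
      cond (partnersU M a) (rankU Lu a) (bU a) b
    & cond (partnersW M b) (rankW Lw b) (bW b) a].
Proof. by []. Qed.

Lemma condU_M2 (U W : finType) (E : U -> W -> bool)
  (Lu : U -> seq W) (Lw : W -> seq U) (bU : U -> nat) (bW : W -> nat)
  (M1 : {set U * W}) (u : U) (w : W) (w' : option W) (u' : option U) a y :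
  is_bmatching E bU bW M1 ->
  blocking Lu Lw bU bW M1 u w ->
  (if fullU bU M1 u then exists2 x, w' = Some x & worstU Lu M1 u x
   else w' = None) ->
  u' != Some a ->
  cond (partnersU (remove_blocking M1 u w w' u') a) (rankU Lu a) (bU a) y ->
  cond (partnersU M1 a) (rankU Lu a) (bU a) y.
Proof.
move=> [_ HbU _]; rewrite blockingE => /and5P[_ _ Hn Hc _] Hw' Ha.
have [/eqP Eau|Nau] := boolP (a == u); last first.
  have -> : partnersU (remove_blocking M1 u w w' u') a = partnersU M1 a.
    by apply/setP => z; rewrite !pU inM2 (negbTE Nau) (negbTE Ha) /= andbT.
  by [].
subst a; apply: (cond_gen (t:=w)) => //.
  by rewrite pU.
move: Hw'; rewrite /fullU; case: eqP => Hf.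
  move=> [x0 -> Hx0]; right; exists x0 => //.
  apply/setP => z; rewrite in_setU1 in_setD1 !pU inM2 eqxx /= (inj_eq (@Some_inj _)).
  case: (eqVneq z w) => [->|Nzw] /=; first by [].
  by rewrite andbF andbT andbC (eq_sym x0).
move=> _; left; rewrite ltn_neqAle HbU andbT; exact/eqP.
Qed.

Lemma condW_M2 (U W : finType) (E : U -> W -> bool)
  (Lu : U -> seq W) (Lw : W -> seq U) (bU : U -> nat) (bW : W -> nat)
  (M1 : {set U * W}) (u : U) (w : W) (w' : option W) (u' : option U) b y :
  is_bmatching E bU bW M1 ->
  blocking Lu Lw bU bW M1 u w ->
  (if fullW bW M1 w then exists2 y, u' = Some y & worstW Lw M1 w y
   else u' = None) ->
  w' != Some b ->
  cond (partnersW (remove_blocking M1 u w w' u') b) (rankW Lw b) (bW b) y ->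
  cond (partnersW M1 b) (rankW Lw b) (bW b) y.
Proof.
move=> [_ _ HbW]; rewrite blockingE => /and5P[_ _ Hn _ Hc] Hu' Hb.
have [/eqP Ebw|Nbw] := boolP (b == w); last first.
  have -> : partnersW (remove_blocking M1 u w w' u') b = partnersW M1 b.
    by apply/setP => z; rewrite !pW inM2 (negbTE Nbw) (negbTE Hb) /= !andbF andbT.
  by [].
subst b; apply: (cond_gen (t:=u)) => //.
  by rewrite pW.
move: Hu'; rewrite /fullW; case: eqP => Hf.
  move=> [y0 -> Hy0]; right; exists y0 => //.
  apply/setP => z; rewrite in_setU1 in_setD1 !pW inM2 eqxx /= (inj_eq (@Some_inj _)) !andbT.
  case: (eqVneq z u) => [->|Nzu] /=; first by [].
  by rewrite andbC (eq_sym y0).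
move=> _; left; rewrite ltn_neqAle HbW andbT; exact/eqP.
Qed.

Unset Implicit Arguments.
Theorem proposition2 (U W : finType) (E : U -> W -> bool)
  (Lu : U -> seq W) (Lw : W -> seq U) (bU : U -> nat) (bW : W -> nat)
  (M1 : {set U * W}) (u : U) (w : W) (w' : option W) (u' : option U) :
  wf_instance E Lu Lw ->
  is_bmatching E bU bW M1 ->
  (u, w) \in blocking_set Lu Lw bU bW M1 ->
  (* w' : a worst partner of u in M1 if u is full, undefined otherwise *)
  (if fullU bU M1 u then exists2 x, w' = Some x & worstU Lu M1 u x
   else w' = None) ->
  (* u' : a worst partner of w in M1 if w is full, undefined otherwise *)
  (if fullW bW M1 w then exists2 y, u' = Some y & worstW Lw M1 w y
   else u' = None) ->
  let M2 := remove_blocking M1 u w w' u' in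
  let B1 := blocking_set Lu Lw bU bW M1 in
  let B2 := blocking_set Lu Lw bU bW M2 in
  B2 :\: B1 != set0 ->
  (isSome u' || isSome w') /\
  (forall p, p \in B2 :\: B1 -> Some p.1 = u' \/ Some p.2 = w').
Proof.
move=> _ Hbm Hbl Hw' Hu' M2 B1 B2 Hne.
rewrite inE /= in Hbl.
have key : forall p, p \in B2 :\: B1 -> Some p.1 = u' \/ Some p.2 = w'.
  case=> a b; rewrite !inE /= => /andP[Hn1 Hb2].
  case: (eqVneq u' (Some a)) => [->|Ha]; first by left.
  case: (eqVneq w' (Some b)) => [->|Hb]; first by right.
  exfalso; move/negP: Hn1; apply.
  move: Hb2; rewrite !blockingE => /and5P[H1 H2 H3 H4 H5].
  apply/and5P; split => //.
  - move: H3; rewrite inM2; apply: contra => Hab.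
    by rewrite Hab (negbTE Hb) (negbTE Ha) andbF orbT.
  - exact: (condU_M2 Hbm Hbl Hw' Ha H4).
  - exact: (condW_M2 Hbm Hbl Hu' Hb H5).
split => //.
case/set0Pn: Hne => p Hp.
by case: (key p Hp) => <-; rewrite ?orbT.
Qed.
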